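(* Let $q$ be a prime power, let $p\ge2$ be an integer, and let $1\le d<p$. For every function $f:\mathbb{F}_q^n\to[0,\infty)$, $$\sum_{\substack{(v_1,\dots,v_p)\in(\mathbb{F}_q^n)^p\\ \mathrm{rank}[v_1,\dots,v_p]=d}}\ \prod_{j=1}^pf(v_j)\le\binom{p}{d}\sum_{m=0}^{p-d}\binom{p-d}{m}(q^d-1)^{p-d-m}q^{nd}\,f(0)^m\,\|f\|_1^{d-1}\,\|f\|_{p-d-m+1}^{p-d-m+1}.$$
   Context: The sum is over ordered $p$-tuples whose linear span has dimension exactly $d$ ($[v_1,\dots,v_p]$ is the $n\times p$ matrix with these columns). For $f:\mathbb{F}_q^n\to\mathbb{R}$ and $r\in(0,\infty)$, $\|f\|_r=\big(q^{-n}\sum_{x\in\mathbb{F}_q^n}|f(x)|^r\big)^{1/r}$. *)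

(* Defs.v *)
From HB Require Import structures.
From mathcomp Require Import all_boot all_order all_algebra.
From mathcomp Require Import reals exp.
Set Implicit Arguments. Unset Strict Implicit. Unset Printing Implicit Defensive.
Import Order.TTheory GRing.Theory Num.Theory.
Local Open Scope ring_scope.

Definition lrnorm (R : realType) (F : finFieldType) (n : nat)
    (f : 'cV[F]_n -> R) (r : R) : R :=
  powR ((#|F|%:R ^+ n)^-1 * \sum_(x : 'cV[F]_n) powR `|f x| r) r^-1.

Definition colmx (F : finFieldType) (n p : nat) (v : {ffun 'I_p -> 'cV[F]_n})
  : 'M[F]_(n, p) := \matrix_(i < n, j < p) v j i ord0.

(* Main.v *)
Require Import Defs.
From HB Require Import structures.
From mathcomp Require Import all_boot all_order all_algebra.
From mathcomp Require Import reals exp.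
From mathcomp Require Import ring lra.
Import Order.TTheory GRing.Theory Num.Theory.
Local Open Scope ring_scope.



Lemma aux_pow (R : comNzRingType) (x y c : R) k :
  (x*y^+k*c)^+k.+1 = x^+k.+1 * c * (y^+k.+1 * c)^+k.
Proof.
rewrite !exprMn -!exprM [c ^+ k.+1]exprS mulnC.
by rewrite -!mulrA; congr (_ * _); rewrite mulrCA.
Qed.

Section Gen.
Variable R : realType.

Lemma image_sum (X Y : finType) (h : X -> Y) (P : pred Y) (G : Y -> R) :
  (forall y, 0 <= G y) -> (forall y, P y -> exists x, h x = y) ->
  \sum_(y | P y) G y <= \sum_x G (h x).
Proof.
move=> G0 hP.
rewrite (partition_big h predT) //= [X in _ <= X](bigID P) /=.
rewrite -[X in X <= _]addr0; apply: lerD; last by apply: sumr_ge0 => y _; apply: sumr_ge0.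
apply: ler_sum => y Py; have [x hx] := hP y Py.
rewrite (bigD1 x) /=; last by rewrite hx eqxx.
rewrite hx -[X in X <= _]addr0 lerD2l; apply: sumr_ge0 => ? _; exact: G0.
Qed.

Lemma amgm2 (a b : R) (k : nat) : 0 <= a -> 0 <= b ->
  (a * b ^+ k) *+ k.+1 <= a ^+ k.+1 + b ^+ k.+1 *+ k.
Proof.
move=> a0 b0.
pose E (i : 'I_k.+1) := if (val i == 0)%N then a ^+ k.+1 else b ^+ k.+1.
have H := @leif_AGM_scaled R _ (predT : {pred 'I_k.+1}) E.
rewrite /= card_ord in H.
have hE : {in predT, forall i, 0 <= E i *+ k.+1}.
  by move=> i _; rewrite /E; case: ifP => _; rewrite mulrn_wge0 // exprn_ge0.
move: (H hE).1 => {H}.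
rewrite big_ord_recl [in X in _ <= X]big_ord_recl /E /=.
rewrite prodr_const sumr_const !card_ord => H.
rewrite -(ler_pXn2r (ltn0Sn k)) ?nnegrE; last first.
- by rewrite addr_ge0 ?mulrn_wge0 ?exprn_ge0.
- by rewrite mulrn_wge0 ?mulr_ge0 ?exprn_ge0.
apply: le_trans H; rewrite le_eqVlt; apply/orP; left; apply/eqP.
by rewrite -[a * b ^+ k *+ k.+1]mulr_natr -[a ^+ k.+1 *+ k.+1]mulr_natr -[b ^+ k.+1 *+ k.+1]mulr_natr aux_pow.
Qed.


Lemma cheb_pt (x y : R) k : 0 <= x -> 0 <= y ->
  x * y ^+ k + y * x ^+ k <= x ^+ k.+1 + y ^+ k.+1.
Proof.
move=> x0 y0.
have H : 0 <= (x - y) * (x ^+ k - y ^+ k).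
  have [xy|yx] := lerP x y.
    apply: mulr_le0; first by rewrite subr_le0.
    by rewrite subr_le0 lerXn2r ?nnegrE.
  apply: mulr_ge0; first by rewrite subr_ge0 ltW.
  by rewrite subr_ge0 lerXn2r ?nnegrE // ltW.
rewrite -subr_ge0 (_ : _ - _ = (x - y) * (x ^+ k - y ^+ k)) //.
rewrite [x ^+ k.+1]exprS [y ^+ k.+1]exprS; ring.
Qed.

Lemma cheb (I : finType) (A : pred I) (a : I -> R) k : (forall i, 0 <= a i) ->
  (\sum_(i in A) a i) * (\sum_(i in A) a i ^+ k) <= #|A|%:R * \sum_(i in A) a i ^+ k.+1.
Proof.
move=> a0.
have E1 : (\sum_(i in A) a i) * (\sum_(i in A) a i ^+ k) =
   \sum_(i in A) \sum_(j in A) a i * a j ^+ k by rewrite big_distrlr.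
have E1' : (\sum_(i in A) a i) * (\sum_(i in A) a i ^+ k) =
   \sum_(i in A) \sum_(j in A) a j * a i ^+ k by rewrite E1 exchange_big.
have E2 : #|A|%:R * \sum_(i in A) a i ^+ k.+1 =
   \sum_(i in A) \sum_(j in A) a i ^+ k.+1.
  rewrite [RHS](eq_bigr (fun i => a i ^+ k.+1 *+ #|A|)); last by move=> i _; rewrite sumr_const.
  by rewrite sumrMnl mulr_natl.
have E2' : #|A|%:R * \sum_(i in A) a i ^+ k.+1 =
   \sum_(i in A) \sum_(j in A) a j ^+ k.+1 by rewrite E2 exchange_big.
rewrite -(ler_pMn2r (ltn0Sn 1)) mulr2n [X in X + _]E1 E1' -big_split /=.
rewrite mulr2n [X in X + _]E2 E2' -big_split /=.
apply: ler_sum => i Ai; rewrite -!big_split /=; apply: ler_sum => j Aj.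
exact: cheb_pt.
Qed.

Lemma powmean (I : finType) (A : pred I) (a : I -> R) k : (forall i, 0 <= a i) ->
  (\sum_(i in A) a i) ^+ k.+1 <= #|A|%:R ^+ k * \sum_(i in A) a i ^+ k.+1.
Proof.
move=> a0; elim: k => [|k IH]; first by rewrite expr0 mul1r.
rewrite exprS; apply: (le_trans (@ler_wpM2l _ (\sum_(i in A) a i) _ _ _ IH)).
  by apply: sumr_ge0 => i _.
rewrite mulrCA exprSr -mulrA; apply: ler_wpM2l; first by rewrite exprn_ge0.
exact: cheb.
Qed.


End Gen.

Definition lin (F : finFieldType) n (I : finType) (u : {ffun I -> 'cV[F]_n})
  (c : {ffun I -> F}) : 'cV[F]_n := \sum_i c i *: u i.
Arguments lin {F n I}.

Section Core.
Variables (R : realType) (F : finFieldType) (n : nat) (f : 'cV[F]_n -> R).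
Hypothesis hf : forall x, 0 <= f x.
Variable I : finType.

Lemma sum_prod_split (i0 : I) (g : 'cV[F]_n -> R) :
  \sum_(u : {ffun I -> 'cV[F]_n}) g (u i0) * \prod_(i | i != i0) f (u i)
  = (\sum_x g x) * (\sum_x f x) ^+ #|I|.-1.
Proof.
pose G (i : I) x := if i == i0 then g x else f x.
have -> : \sum_(u : {ffun I -> 'cV[F]_n}) g (u i0) * \prod_(i | i != i0) f (u i)
   = \sum_(u : {ffun I -> 'cV[F]_n}) \prod_i G i (u i).
  apply: eq_bigr => u _; rewrite [RHS](bigD1 i0) //= /G eqxx; congr (_ * _).
  by apply: eq_bigr => i /negbTE ->.
rewrite -bigA_distr_bigA /= (bigD1 i0) //= /G eqxx; congr (_ * _).
rewrite (eq_bigr (fun _ => \sum_x f x)); last by move=> i /negbTE ->.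
by rewrite -(cardC1 i0) -prodr_const.
Qed.

Lemma core1 (c : {ffun I -> F}) (k : nat) : c != 0 ->
  \sum_(u : {ffun I -> 'cV[F]_n}) (\prod_i f (u i)) * f (lin u c) ^+ k
   <= (\sum_x f x) ^+ #|I|.-1 * \sum_x f x ^+ k.+1.
Proof.
move=> cn0.
have [i0 ci0] : exists i0, c i0 != 0.
  apply/existsP; apply: contraR cn0 => /existsPn H; apply/eqP/ffunP => i.
  by rewrite ffunE; apply/eqP; move: (H i); rewrite negbK.
pose phi (u : {ffun I -> 'cV[F]_n}) : {ffun I -> 'cV[F]_n} :=
  [ffun i => if i == i0 then lin u c else u i].
pose psi (u : {ffun I -> 'cV[F]_n}) : {ffun I -> 'cV[F]_n} :=
  [ffun i => if i == i0 then (c i0)^-1 *: (u i0 - \sum_(j | j != i0) c j *: u j) else u i].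
have linE u : lin u c = c i0 *: u i0 + \sum_(j | j != i0) c j *: u j.
  by rewrite /lin (bigD1 i0).
have sumphi u : \sum_(j | j != i0) c j *: phi u j = \sum_(j | j != i0) c j *: u j.
  by apply: eq_bigr => j /negbTE hj; rewrite /phi ffunE hj.
have sumpsi u : \sum_(j | j != i0) c j *: psi u j = \sum_(j | j != i0) c j *: u j.
  by apply: eq_bigr => j /negbTE hj; rewrite /psi ffunE hj.
have bij : bijective phi.
  exists psi => u; apply/ffunP => i.
    rewrite /psi ffunE; case: ifP => [/eqP ->|hi]; last by rewrite /phi ffunE hi.
    by rewrite sumphi /phi ffunE eqxx linE addrK scalerA mulVf // scale1r.
  rewrite /phi ffunE; case: ifP => [/eqP ->|hi]; last by rewrite /psi ffunE hi.
  by rewrite linE sumpsi /psi ffunE eqxx scalerA mulfV // scale1r subrK.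
pose P (u : {ffun I -> 'cV[F]_n}) := \prod_(i | i != i0) f (u i).
have Pphi u : P (phi u) = P u.
  by apply: eq_bigr => j /negbTE hj; rewrite /phi ffunE hj.
have P0 u : 0 <= P u by apply: prodr_ge0 => i _.
have E1 : \sum_(u : {ffun I -> 'cV[F]_n}) f (lin u c) ^+ k.+1 * P u
        = \sum_(u : {ffun I -> 'cV[F]_n}) f (u i0) ^+ k.+1 * P u.
  rewrite [RHS](reindex phi); last exact: onW_bij.
  by apply: eq_bigr => u _; rewrite Pphi /phi ffunE eqxx.
have E2 : \sum_(u : {ffun I -> 'cV[F]_n}) f (u i0) ^+ k.+1 * P u
        = (\sum_x f x ^+ k.+1) * (\sum_x f x) ^+ #|I|.-1.
  exact: (sum_prod_split i0 (fun x => f x ^+ k.+1)).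
rewrite mulrC -E2 -(ler_pMn2r (ltn0Sn k)) -sumrMnl.
have -> : (\sum_(u : {ffun I -> 'cV[F]_n}) f (u i0) ^+ k.+1 * P u) *+ k.+1 =
   \sum_(u : {ffun I -> 'cV[F]_n}) (f (u i0) ^+ k.+1 + f (lin u c) ^+ k.+1 *+ k) * P u.
  rewrite mulrS -[in X in _ + X]E1 -sumrMnl -big_split /=.
  by apply: eq_bigr => u _; rewrite mulrDl mulrnAl.
apply: ler_sum => u _.
rewrite (bigD1 i0) //= -/(P u) -mulrA (mulrC (P u)) mulrA -mulrnAl ler_wpM2r //.
exact: amgm2.
Qed.



Lemma core (k : nat) :
  \sum_(u : {ffun I -> 'cV[F]_n}) (\prod_i f (u i)) *
      (\sum_(c : {ffun I -> F} | c != 0) f (lin u c)) ^+ k.+1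
  <= (#|[pred c : {ffun I -> F} | c != 0]|%:R) ^+ k.+1 *
     ((\sum_x f x) ^+ #|I|.-1 * \sum_x f x ^+ k.+2).
Proof.
set N := #|[pred c : {ffun I -> F} | c != 0]|.
set Q := (\sum_x f x) ^+ #|I|.-1 * \sum_x f x ^+ k.+2.
apply: (@le_trans _ _ (\sum_(u : {ffun I -> 'cV[F]_n}) (\prod_i f (u i)) *
   (N%:R ^+ k * \sum_(c : {ffun I -> F} | c != 0) f (lin u c) ^+ k.+1))).
  apply: ler_sum => u _; apply: ler_wpM2l; first by apply: prodr_ge0.
  exact: (@powmean R _ [pred c : {ffun I -> F} | c != 0]).
under eq_bigr do rewrite mulrCA mulr_sumr.
rewrite -mulr_sumr exchange_big /= exprSr -mulrA; apply: ler_wpM2l.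
  by rewrite exprn_ge0.
apply: (@le_trans _ _ (\sum_(c : {ffun I -> F} | c != 0) Q)).
  by apply: ler_sum => c cn0; exact: core1.
by rewrite sumr_const mulr_natl.
Qed.


Lemma core_all (k : nat) : (0 < #|I|)%N ->
  \sum_(u : {ffun I -> 'cV[F]_n}) (\prod_i f (u i)) *
      (\sum_(c : {ffun I -> F} | c != 0) f (lin u c)) ^+ k
  <= (#|[pred c : {ffun I -> F} | c != 0]|%:R) ^+ k *
     ((\sum_x f x) ^+ #|I|.-1 * \sum_x f x ^+ k.+1).
Proof.
move=> /card_gt0P [i0 _].
case: k => [|k]; last exact: core.
rewrite !expr0 mul1r.
under eq_bigr do rewrite mulr1 (bigD1 i0) //=.
by rewrite sum_prod_split mulrC.
Qed.

Lemma exp_bound (e : nat) : (0 < #|I|)%N ->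
  \sum_(u : {ffun I -> 'cV[F]_n}) (\prod_i f (u i)) *
      (\sum_(c : {ffun I -> F}) f (lin u c)) ^+ e
  <= \sum_(m < e.+1) ('C(e, m)%:R * f 0 ^+ m *
      ((#|[pred c : {ffun I -> F} | c != 0]|%:R) ^+ (e - m) *
       ((\sum_x f x) ^+ #|I|.-1 * \sum_x f x ^+ (e - m).+1))).
Proof.
move=> hI.
have lin0 u : lin u 0 = 0.
  by rewrite /lin; apply: big1 => i _; rewrite ffunE scale0r.
under eq_bigr do rewrite (bigD1 (0 : {ffun I -> F})) //= lin0 addrC exprDn mulr_sumr.
rewrite exchange_big /=; apply: ler_sum => m _.
under eq_bigr do rewrite -mulrnAr mulrA -mulr_natr.
rewrite -mulr_suml [X in _ <= X]mulrC (mulrC (f 0 ^+ m)).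
apply: ler_wpM2r; first by rewrite mulr_ge0 ?exprn_ge0.
exact: core_all.
Qed.

End Core.



Definition spanS (F : finFieldType) (n p : nat) (S : {set 'I_p}) (v : {ffun 'I_p -> 'cV[F]_n}) : bool :=
  [forall j, [exists c : {ffun {x : 'I_p | x \in S} -> F},
     v j == lin [ffun i : {x : 'I_p | x \in S} => v (val i)] c]].

Definition Psi (F : finFieldType) (n p : nat) (S : {set 'I_p})
  (u : {ffun {x : 'I_p | x \in S} -> 'cV[F]_n})
  (g : {ffun {x : 'I_p | x \in ~: S} -> {ffun {x : 'I_p | x \in S} -> F}}) :
  {ffun 'I_p -> 'cV[F]_n} :=
  [ffun j => match insub j : option {x : 'I_p | x \in S} with
     | Some i => u i
     | None => match insub j : option {x : 'I_p | x \in ~: S} with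
       | Some j' => lin u (g j') | None => 0 end end].

Arguments spanS {F n p}.
Arguments Psi {F n p S}.

Section Step4.
Variables (R : realType) (F : finFieldType) (n : nat) (f : 'cV[F]_n -> R).
Hypothesis hf : forall x, 0 <= f x.
Variables (p : nat) (S : {set 'I_p}).
Notation I := {x : 'I_p | x \in S}.
Notation J := {x : 'I_p | x \in ~: S}.

Lemma prodPsi u g : \prod_j f (Psi u g j) =
  \prod_(i : I) f (u i) * \prod_(j : J) f (lin u (g j)).
Proof.
rewrite (bigID (fun j => j \in S)) /=; congr (_ * _).
  rewrite (big_sub S); apply: eq_bigr => i _.
  by rewrite ffunE valK.
rewrite (eq_bigl (fun j => j \in ~: S)); last by move=> j; rewrite in_setC.
rewrite (big_sub (~: S)); apply: eq_bigr => j _.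
have nS : val j \notin S by rewrite -in_setC (valP j).
by rewrite ffunE insubN // valK.
Qed.

Lemma prod_constT (T : finType) (X : R) : \prod_(j : T) X = X ^+ #|T|.
Proof.
have -> : \prod_(j : T) X = \prod_(j in [set: T]) X by apply: eq_bigl => j; rewrite in_setT.
by rewrite prodr_const cardsT.
Qed.

Lemma step4 :
  \sum_(v : {ffun 'I_p -> 'cV[F]_n} | spanS S v) \prod_j f (v j)
  <= \sum_(u : {ffun I -> 'cV[F]_n}) (\prod_i f (u i)) *
        (\sum_(c : {ffun I -> F}) f (lin u c)) ^+ #|{: J}|.
Proof.
apply: le_trans (@image_sum R _ _ (fun x : {ffun I -> 'cV[F]_n} * {ffun J -> {ffun I -> F}} => Psi x.1 x.2) (fun v => spanS S v) (fun v => \prod_j f (v j)) _ _) _.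
- by move=> v; apply: prodr_ge0.
- move=> v /forallP sp.
  pose u : {ffun I -> 'cV[F]_n} := [ffun i : I => v (val i)].
  pose g : {ffun J -> {ffun I -> F}} :=
    [ffun j' : J => odflt 0 [pick c | v (val j') == lin u c]].
  exists (u, g); apply/ffunP => j /=; rewrite ffunE.
  case: insubP => [i _ <-|nS]; first by rewrite ffunE.
  case: insubP => [j' _ <-|nS']; last by rewrite in_setC nS in nS'.
  rewrite ffunE; case: pickP => [c /eqP <- //|H].
  by have /existsP [c /eqP hc] := sp (val j'); move: (H c); rewrite hc eqxx.
rewrite -(pair_bigA _ (fun u g => \prod_j f (Psi u g j))) /= le_eqVlt; apply/orP; left; apply/eqP.
apply: eq_bigr => u _.
under eq_bigr do rewrite prodPsi.
rewrite -mulr_sumr; congr (_ * _).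
by rewrite -prod_constT bigA_distr_bigA.
Qed.

End Step4.



Lemma rank_span (F : finFieldType) (n p d : nat) (v : {ffun 'I_p -> 'cV[F]_n}) :
  \rank (colmx v) = d -> exists S : {set 'I_p}, #|S| = d /\ spanS S v.
Proof.
move=> rk.
set A := (colmx v)^T.
have rA : \rank A = d by rewrite mxrank_tr.
set g := maxrankfun A.
exists [set g k | k : 'I_(\rank A)]; split.
  by rewrite card_imset ?card_ord //; exact: maxrankfun_inj.
apply/forallP => j.
have Hj : (row j A <= rowsub g A)%MS by rewrite eq_maxrowsub row_sub.
have [D HD] := submxP Hj.
have gS k : g k \in [set g k | k : 'I_(\rank A)] by apply: imset_f.
pose h (k : 'I_(\rank A)) : {x : 'I_p | x \in [set g k | k : 'I_(\rank A)]} := exist _ (g k) (gS k).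
apply/existsP.
exists [ffun i => \sum_(k | h k == i) D 0 k].
have E1 : v j = \sum_k D 0 k *: v (g k).
  apply/matrixP => x y; rewrite ord1 summxE.
  move/matrixP: HD => /(_ 0 x); rewrite !mxE => ->.
  by apply: eq_bigr => k _; rewrite !mxE.
rewrite E1 /lin (partition_big h predT) //=; apply/eqP; apply: eq_bigr => i _.
rewrite ffunE scaler_suml; apply: eq_bigr => k /eqP <-.
by rewrite ffunE.
Qed.



Section Final.
Variables (R : realType) (F : finFieldType) (n : nat) (f : 'cV[F]_n -> R).
Hypothesis hf : forall x, 0 <= f x.

Lemma lr1 : lrnorm f 1 = ((#|F|%:R : R) ^+ n)^-1 * \sum_x f x.
Proof.
rewrite /lrnorm invr1 powRr1; last first.
  by rewrite mulr_ge0 ?invr_ge0 ?exprn_ge0 ?ler0n // sumr_ge0 // => x _; exact: powR_ge0.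
congr (_ * _); apply: eq_bigr => x _; by rewrite powRr1 ?ger0_norm.
Qed.

Lemma lrk (k : nat) : lrnorm f (k.+1)%:R ^+ k.+1 =
  ((#|F|%:R : R) ^+ n)^-1 * \sum_x f x ^+ k.+1.
Proof.
rewrite /lrnorm -powR_mulrn ?powR_ge0 // -powRrM mulVf ?pnatr_eq0 // powRr1; last first.
  by rewrite mulr_ge0 ?invr_ge0 ?exprn_ge0 ?ler0n // sumr_ge0 // => x _; exact: powR_ge0.
congr (_ * _); apply: eq_bigr => x _; by rewrite powR_mulrn ?ger0_norm.
Qed.

Variables (p d : nat).
Hypothesis hd1 : (1 <= d)%N.

Let B := \sum_(m < (p - d).+1) ('C(p - d, m)%:R * f 0 ^+ m *
      ((((#|F| ^ d).-1)%:R : R) ^+ (p - d - m) *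
       ((\sum_x f x) ^+ d.-1 * \sum_x f x ^+ (p - d - m).+1))).

Lemma perS (S : {set 'I_p}) : #|S| = d ->
  \sum_(v : {ffun 'I_p -> 'cV[F]_n} | spanS S v) \prod_j f (v j) <= B.
Proof.
move=> hS.
apply: le_trans (@step4 R F n f hf p S) _.
have cI : #|{: {x : 'I_p | x \in S}}| = d by rewrite card_sig.
have cJ : #|{: {x : 'I_p | x \in ~: S}}| = (p - d)%N.
  rewrite card_sig; have := cardsC S; rewrite card_ord hS => E0; rewrite -[X in (X - _)%N]E0 addKn; exact: eq_card.
have cN : #|[pred c : {ffun {x : 'I_p | x \in S} -> F} | c != 0]| = (#|F| ^ d).-1.
  by rewrite -cI -card_ffun -(cardC1 (0 : {ffun {x : 'I_p | x \in S} -> F})); apply: eq_card.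
rewrite cJ; apply: le_trans (@exp_bound R F n f hf _ (p - d) _) _; first by rewrite cI.
by rewrite cN cI.
Qed.

End Final.

Theorem lemma3p5 (R : realType) (F : finFieldType) (n p d : nat)
    (hp : (2 <= p)%N) (hd1 : (1 <= d)%N) (hdp : (d < p)%N)
    (f : 'cV[F]_n -> R) (hf : forall x, 0 <= f x) :
  \sum_(v : {ffun 'I_p -> 'cV[F]_n} | \rank (colmx v) == d) \prod_(j < p) f (v j)
  <= 'C(p, d)%:R *
     \sum_(0 <= m < (p - d).+1)
       'C(p - d, m)%:R * ((#|F|%:R : R) ^+ d - 1) ^+ (p - d - m)
       * (#|F|%:R : R) ^+ (n * d) * f 0 ^+ m
       * lrnorm f 1 ^+ (d - 1)
       * lrnorm f (p - d - m + 1)%:R ^+ (p - d - m + 1).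
Proof.
apply: (@le_trans _ _ (\sum_(S : {set 'I_p} | #|S| == d)
   \sum_(v : {ffun 'I_p -> 'cV[F]_n} | spanS S v) \prod_j f (v j))).
  under [X in _ <= X]eq_bigr do rewrite big_mkcond.
  rewrite [X in _ <= X]exchange_big /= [X in X <= _]big_mkcond /=.
  apply: ler_sum => v _; case: ifP => [/eqP rk | _].
    have [S [hS sp]] := @rank_span F n p d v rk.
    rewrite (bigD1 S) /=; last by rewrite hS eqxx.
    rewrite sp lerDl; apply: sumr_ge0 => S' _; case: ifP => // _.
    exact: prodr_ge0.
  by apply: sumr_ge0 => S' _; case: ifP => // _; exact: prodr_ge0.
apply: (@le_trans _ _ (\sum_(S : {set 'I_p} | #|S| == d)
   \sum_(m < (p - d).+1) ('C(p - d, m)%:R * f 0 ^+ m *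
      ((((#|F| ^ d).-1)%:R : R) ^+ (p - d - m) *
       ((\sum_x f x) ^+ d.-1 * \sum_x f x ^+ (p - d - m).+1))))).
  by apply: ler_sum => S /eqP hS; exact: perS.
set B := \sum_(m < _) _.
have -> : \sum_(S : {set 'I_p} | #|S| == d) B = B *+ #|[set S : {set 'I_p} | #|S| == d]|.
  by rewrite -sumr_const; apply: eq_bigl => S; rewrite inE.
rewrite card_draws card_ord -mulr_natl le_eqVlt; apply/orP; left; apply/eqP.
congr (_ * _); rewrite big_mkord /B; apply: eq_bigr => m _.
have q0 : (0 < #|F|)%N by apply/card_gt0P; exists 0.
have hN : (((#|F| ^ d).-1)%:R : R) = (#|F|%:R : R) ^+ d - 1.
  by rewrite -subn1 natrB ?natrX // expn_gt0 q0.
rewrite addn1 lrk // lr1 // hN.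
rewrite subn1 exprM.
set X := (#|F|%:R : R) ^+ n.
have X0 : X != 0 by rewrite expf_neq0 // pnatr_eq0 -lt0n.
have -> : X ^+ d = X ^+ d.-1 * X by rewrite -exprSr prednK.
rewrite exprMn exprVn.
have Xd : X ^+ d.-1 != 0 by rewrite expf_neq0.
field.
by rewrite Xd X0.
Qed.
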